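(* If the ST problem for $(D_{SC},F,B)$ has a positive answer, then there exists a set cover of size $k$ for $(\mathcal U,\mathcal S)$, i.e. a $k$-element subfamily of $\mathcal S$ whose union is $\mathcal U$.
   Context: Snow Team problem (ST): given a digraph $D=(\mathcal V,\mathcal A)$ whose underlying graph is connected, and $F:\mathcal V\to\{0,1\}$, $B:\mathcal V\to\mathbb N$, with $\mathbf k_B=\sum_vB(v)$: do there exist $\mathbf k_B$ directed walks, exactly $B(v)$ of which start at each $v$, such that, letting $H$ be the subgraph consisting of the vertices and arcs of these walks, all vertices of $F^{-1}(1)$ lie in one connected component of the underlying undirected graph of $H$? Construction: $\mathcal U=\{1,\dots,n\}$, $\mathcal S=\{S_1,\dots,S_m\}$ with $S_t\subseteq\mathcal U$, $\bigcup_tS_t=\mathcal U$, and $1\le k\le m$. Write $S_t=\{x_1<\dots<x_{\ell(t)}\}$ and $I_i=\{j: i\in S_j\}$. The digraph $D_{SC}$ has vertices $u_i$ ($i\in\mathcal U$); $u_{i,j},u'_{i,j},v_{i,j},v'_{i,j}$ ($i\in\mathcal U$, $j\in I_i$); and $z,z_1,\dots,z_k$. Its arcs are those of the vertical paths $P_{i,j}=(u_{i,j},u_i,u'_{i,j},v_{i,j},v'_{i,j})$ ($i\in\mathcal U,j\in I_i$), of the horizontal paths $P^h_t=(z,v_{x_1,t},v_{x_2,t},\dots,v_{x_{\ell(t)},t})$ ($t\in\{1,\dots,m\}$, with $x_1<\dots<x_{\ell(t)}$ the elements of $S_t$), and the arcs $(z_l,z)$ for $l=1,\dots,k$. Set $F(v)=1$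 for all vertices $v$, and $B(v)=1$ if $v$ is a source of $D_{SC}$ (i.e. $v\in\{u_{i,j}\}\cup\{z_1,\dots,z_k\}$) and $B(v)=0$ otherwise. *)

(* Defs.v *)
From Stdlib Require Import Relations PeanoNat.
From HB Require Import structures.
From mathcomp Require Import all_boot.
Set Implicit Arguments. Unset Strict Implicit. Unset Printing Implicit Defensive.

Section ST.
Variable T : eqType.

Definition is_walk (V : pred T) (A : T -> T -> Prop) (w : seq T) : Prop :=
  w <> [::] /\ (forall x, x \in w -> V x) /\
  (forall p a b q, w = p ++ a :: b :: q -> A a b).

Definition H_vertex (W : seq (seq T)) (x : T) : Prop :=
  exists2 w, w \in W & x \in w.
Definition H_arc (W : seq (seq T)) (a b : T) : Prop :=
  exists2 w, w \in W & exists p q, w = p ++ a :: b :: q.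
Definition H_connected (W : seq (seq T)) (x y : T) : Prop :=
  H_vertex W x /\
  clos_refl_trans T (fun a b => H_arc W a b \/ H_arc W b a) x y.

Definition ST_positive (V : pred T) (A : T -> T -> Prop)
    (F : T -> bool) (B : T -> nat) : Prop :=
  exists W : seq (seq T),
    (forall w, w \in W -> is_walk V A w) /\
    (forall v, V v -> count (fun w => ohead w == Some v) W = B v) /\
    (forall x y, V x -> V y -> F x -> F y -> H_connected W x y).
End ST.

Inductive vtx : Type :=
| vU    of nat
| vUij  of nat & nat
| vUpij of nat & nat
| vVij  of nat & nat
| vVpij of nat & nat
| vZ
| vZl   of nat.

Lemma vtx_comparable : comparable vtx.
Proof. move=> x y; rewrite /decidable; decide equality; exact: Nat.eq_dec. Qed.
HB.instance Definition _ := comparableMixin vtx_comparable.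

Section DSC.
(* set cover instance: U = {1..n}, S_1..S_m given by membership predicates *)
Variables (n m k : nat) (S : nat -> pred nat).

Definition inU (i : nat) : bool := (1 <= i <= n).
Definition inI (i j : nat) : bool := [&& 1 <= i <= n, 1 <= j <= m & S j i].

Definition DSC_vertex (v : vtx) : bool :=
  match v with
  | vU i => inU i
  | vUij i j | vUpij i j | vVij i j | vVpij i j => inI i j
  | vZ => true
  | vZl l => 1 <= l <= k
  end.

Inductive DSC_arc : vtx -> vtx -> Prop :=
(* vertical paths P_{i,j} = (u_{i,j}, u_i, u'_{i,j}, v_{i,j}, v'_{i,j}) *)
| arc_v1 i j : inI i j -> DSC_arc (vUij i j) (vU i)
| arc_v2 i j : inI i j -> DSC_arc (vU i) (vUpij i j)
| arc_v3 i j : inI i j -> DSC_arc (vUpij i j) (vVij i j)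
| arc_v4 i j : inI i j -> DSC_arc (vVij i j) (vVpij i j)
(* horizontal paths P^h_t = (z, v_{x1,t}, ..., v_{x_l(t),t}) *)
| arc_h0 t i : 1 <= t <= m -> S t i -> (forall x, x < i -> ~~ S t x) ->
    DSC_arc vZ (vVij i t)
| arc_h t i i' : 1 <= t <= m -> S t i -> S t i' -> i < i' ->
    (forall x, i < x < i' -> ~~ S t x) -> DSC_arc (vVij i t) (vVij i' t)
| arc_z l : 1 <= l <= k -> DSC_arc (vZl l) vZ.

Definition F_SC (v : vtx) : bool := true.
Definition B_SC (v : vtx) : nat :=
  match v with vUij _ _ | vZl _ => 1 | _ => 0 end.

Definition set_cover_instance : Prop :=
  (forall t, 1 <= t <= m -> forall x, S t x -> 1 <= x <= n) /\
  (forall i, 1 <= i <= n -> exists2 t, 1 <= t <= m & S t i) /\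
  1 <= k <= m.

Definition has_set_cover_of_size : Prop :=
  exists C : seq nat,
    [/\ uniq C, size C = k, (forall t, t \in C -> 1 <= t <= m) &
        forall i, 1 <= i <= n -> exists2 t, t \in C & S t i].
End DSC.

(* Main.v *)
Require Import Defs.
From HB Require Import structures.
From mathcomp Require Import all_boot.
From Stdlib Require Import Relations.
From mathcomp Require Import zify.

Lemma count0 (T : Type) (a : pred T) s : (forall x, ~~ a x) -> count a s = 0.
Proof. by move=> H; elim: s => //= x s ->; rewrite (negbTE (H x)). Qed.

Lemma sub_in_count' (T : eqType) (a b : pred T) s :
  (forall x, x \in s -> a x -> b x) -> count a s <= count b s.
Proof.
elim: s => //= x s IH H.
have h2 : count a s <= count b s by apply: IH => y hy; apply: H; rewrite inE hy orbT.
case ha: (a x); last by rewrite add0n; apply: leq_trans h2 (leq_addl _ _).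
by rewrite (H x (mem_head _ _) ha).
Qed.

Lemma count_has_uniq (A : eqType) (T : eqType) (s : seq (seq T)) (J : seq A) (f : A -> T) :
  uniq (map f J) -> (forall a, a \in J -> count (fun w => ohead w == Some (f a)) s = 1) ->
  count (fun w => has (fun a => ohead w == Some (f a)) J) s = size J.
Proof.
elim: J => [|a J IH] /=; first by move=> _ _; apply: count0.
move=> /andP[hn hu] hc.
have := count_predUI (fun w => ohead w == Some (f a)) (fun w => has (fun a => ohead w == Some (f a)) J) s.
rewrite (@count0 _ (predI _ _)); last first.
  move=> w /=; apply/negP => /andP[/eqP -> /hasP[b hb /eqP[e]]].
  by move: hn; rewrite e map_f.
rewrite addn0 hc ?mem_head // IH //; last by move=> b hb; apply: hc; rewrite inE hb orbT.

Qed.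

Lemma two_count (T : eqType) (P : pred T) s a b :
  a \in s -> b \in s -> a != b -> P a -> P b -> 1 < count P s.
Proof.
elim: s => //= x s IH; rewrite !inE => ha hb hab pa pb.
case/orP: ha => [/eqP ea|ha]; case/orP: hb => [/eqP eb|hb].
- by subst; rewrite eqxx in hab.
- subst x; rewrite pa add1n ltnS -has_count; apply/hasP; by exists b.
- subst x; rewrite pb add1n ltnS -has_count; apply/hasP; by exists a.
- by apply: leq_trans (IH ha hb hab pa pb) (leq_addl _ _).
Qed.

Lemma pigeon (T : eqType) (J M : seq T) t :
  uniq J -> {subset J <= M} -> t \in J -> 1 < count_mem t M -> size J < size M.
Proof.
move=> hu hs ht hc.
have htM : t \in M by rewrite -has_pred1 has_count; apply: leq_trans hc.
have hp := perm_to_rem htM.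
have hsub : {subset J <= rem t M}.
  move=> y hy; case: (eqVneq y t) => [->|ne].
  - move: hc; rewrite (permP hp) /= eqxx add1n ltnS -has_count => /hasP[z hz /eqP ez]; by rewrite ez in hz.
  - by move: (hs _ hy); rewrite (perm_mem hp) inE (negbTE ne).
have := uniq_leq_size hu hsub; rewrite size_rem //.
have : 0 < size M by case: (M) htM.
lia.
Qed.

Lemma count_pmap (A B : eqType) (g : A -> option B) s t :
  count_mem t (pmap g s) = count (fun w => g w == Some t) s.
Proof.
elim: s => //= x s IH; case: (g x) => [b|] /=; last by rewrite IH.
by rewrite IH.
Qed.

Section Main.
Variables (n m k : nat) (S : nat -> pred nat) (W : seq (seq vtx)).
Let V := DSC_vertex n m k S.
Let A := DSC_arc n m k S.
Hypothesis hinst : set_cover_instance n m k S.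
Hypothesis hw : forall w, w \in W -> is_walk V A w.
Hypothesis hB : forall v, V v -> count (fun w => ohead w == Some v) W = B_SC v.
Hypothesis hC : forall x y, V x -> V y -> H_connected W x y.

Lemma arcW {w p a b q} : w \in W -> w = p ++ a :: b :: q -> A a b.
Proof. by move=> /hw [_ [_ H]] e; apply: H e. Qed.

Lemma inH {v} : V v -> exists2 w, w \in W & v \in w.
Proof. by move=> hv; case: (hC v v hv hv). Qed.

Lemma nohead {v w} : V v -> B_SC v = 0 -> w \in W -> ohead w != Some v.
Proof.
move=> hv hb hwW; apply/negP => /eqP e.
have := hB v hv; rewrite hb => e0.
have : ~~ has (fun w => ohead w == Some v) W by rewrite has_count e0.
by move=> /hasPn /(_ _ hwW); rewrite e eqxx.
Qed.

Lemma pred_of {w p x q} : w \in W -> w = p ++ x :: q -> V x -> B_SC x = 0 ->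
  exists p' y, p = rcons p' y /\ A y x.
Proof.
move=> hwW e hv hb; case/lastP: p e => [|p' y] e.
  by have := nohead hv hb hwW; rewrite e /= eqxx.
exists p', y; split => //; apply: (arcW hwW (p:=p') (q:=q)); by rewrite e cat_rcons.
Qed.

Lemma noin_head {w p x q} : w \in W -> w = p ++ x :: q -> (forall y, ~ A y x) -> p = [::].
Proof.
move=> hwW; case/lastP: p => [//|p' y] e H; exfalso; apply: (H y).
apply: (arcW hwW (p:=p') (q:=q)); by rewrite e cat_rcons.
Qed.

Lemma split_in {w : seq vtx} {x : vtx} : x \in w -> exists p q, w = p ++ x :: q.
Proof. by case/splitPr => p q; exists p, q. Qed.

Lemma z_walk {w p q} : w \in W -> w = p ++ vZ :: q -> exists l, p = [:: vZl l].
Proof.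
move=> hwW e; have [p' [y [ep ha]]] := pred_of hwW e (erefl true) (erefl 0).
subst w p; inversion ha; subst.
exists l; rewrite (noin_head (p:=p') (x:=vZl l) (q:=vZ::q) hwW) //.
  by rewrite cat_rcons.
by move=> y' hy; inversion hy.
Qed.

Lemma up_walk {w p x j q} : w \in W -> w = p ++ vUpij x j :: q -> inI n m S x j ->
  exists a, p = [:: vUij x a; vU x] /\ inI n m S x a.
Proof.
move=> hwW e hij; have [p1 [y [ep ha]]] := pred_of hwW e hij (erefl 0).
subst w p; inversion ha; subst.
have hx : V (vU x) by move: hij; rewrite /= /inI /inU => /and3P[].
have e2 : rcons p1 (vU x) ++ vUpij x j :: q = p1 ++ vU x :: vUpij x j :: q by rewrite cat_rcons.
have [p2 [y2 [ep2 ha2]]] := pred_of hwW e2 hx (erefl 0).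
subst p1; inversion ha2; subst.
exists j0; split => //.
rewrite (noin_head (p:=p2) (x:=vUij x j0) (q:=vU x :: vUpij x j :: q) hwW) //.
  by rewrite !cat_rcons.
by move=> y' hy; inversion hy.
Qed.


Definition fz (w : seq vtx) : option nat :=
  match w with vZl _ :: vZ :: vVij _ t :: _ => Some t | _ => None end.
Definition C0 := undup (pmap fz W).

Lemma fz_C0 w t : w \in W -> fz w = Some t -> t \in C0.
Proof. by move=> hwW e; rewrite mem_undup mem_pmap -e map_f. Qed.

Lemma hv_pred {t} (notz : t \notin C0) {x}
  (IH : forall x0, x0 < x -> forall w p x' q, w \in W ->
         w = p ++ vVij x0 t :: vVij x' t :: q -> False)
  {w p r} : w \in W -> w = p ++ vVij x t :: r -> inI n m S x t ->
  exists a, p = [:: vUij x a; vU x; vUpij x t] /\ inI n m S x a.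
Proof.
move=> hwW e hxt; have [p1 [y [ep ha]]] := pred_of hwW e hxt (erefl 0).
subst w p; inversion ha; subst.
- have e1 : rcons p1 (vUpij x t) ++ vVij x t :: r = p1 ++ vUpij x t :: vVij x t :: r
    by rewrite cat_rcons.
  have [a [ep ha']] := up_walk hwW e1 hxt.
  by exists a; rewrite ep.
- have e1 : rcons p1 vZ ++ vVij x t :: r = p1 ++ vZ :: vVij x t :: r by rewrite cat_rcons.
  have [l el] := z_walk hwW e1.
  subst p1; move: notz; by rewrite (fz_C0 _ t hwW).
- exfalso; apply: (IH i H5 _ p1 x r hwW); by rewrite cat_rcons.
Qed.


Lemma arc_h_inv {x t x' t'} : A (vVij x t) (vVij x' t') -> (1 <= t <= m) /\ S t x.
Proof. move=> ha; inversion ha; subst; by split. Qed.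

Lemma arc_vp_inv {y x t} : A y (vVpij x t) -> y = vVij x t.
Proof. move=> ha; inversion ha; subst; by []. Qed.

Lemma no_horiz t : t \notin C0 -> forall x w p x' q, w \in W ->
  w = p ++ vVij x t :: vVij x' t :: q -> False.
Proof.
move=> notz x; elim/ltn_ind: x => x IH w p x' q hwW e.
have [H1 H3] := arc_h_inv (arcW hwW e).
have hxt : inI n m S x t.
  case: hinst => h1 _; apply/and3P; split => //; exact: h1 t H1 x H3.

have [a [ep hia]] := hv_pred notz IH hwW e hxt.
have hv' : V (vVpij x t) by [].
have [w2 hw2 hin2] := inH hv'.
have [p2 [q2 e2]] := split_in hin2.
have [p2' [y [ep2 ha2]]] := pred_of hw2 e2 hv' (erefl 0).
rewrite (arc_vp_inv ha2) in ep2; subst p2.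
have e2' : w2 = p2' ++ vVij x t :: vVpij x t :: q2 by rewrite e2 cat_rcons.
have [b [ep2' hib]] := hv_pred notz IH hw2 e2' hxt.
subst p2'.
set J := [seq j <- iota 1 m | inI n m S x j].
set Px := fun w : seq vtx => has (fun a => ohead w == Some (vUij x a)) J.
set g := fun w : seq vtx => match w with _ :: _ :: vUpij _ j :: _ => Some j | _ => None end.
set M := pmap g (filter Px W).
have hJ : forall j, (j \in J) = inI n m S x j.
  move=> j; rewrite mem_filter mem_iota andbC; apply/andP/idP => [[]//|h]; split => //.
  by move: h; rewrite /inI => /and3P[_ /andP[h1 h2] _]; lia.
have hcnt : count Px W = size J.
  apply: count_has_uniq.
    rewrite map_inj_uniq ?filter_uniq ?iota_uniq //.
    by move=> a1 a2 [].
  by move=> a1; rewrite hJ => h; rewrite (hB (vUij x a1) h).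
have hsz : size M <= size J.
  rewrite -hcnt -size_filter /M size_pmap; exact: count_size.
have hsub : {subset J <= M}.
  move=> j; rewrite hJ => hj.
  have hv3 : V (vUpij x j) by [].
  have [w3 hw3 hin3] := inH hv3.
  have [p3 [q3 e3]] := split_in hin3.
  have [a3 [ep3 hia3]] := up_walk hw3 e3 hj.
  subst p3.
  rewrite /M mem_pmap; apply/mapP; exists w3.
    rewrite mem_filter; apply/andP; split => //.
    rewrite /Px e3 /=; apply/hasP; exists a3; by rewrite ?hJ.
  by rewrite e3.
have htJ : t \in J by rewrite hJ.
have hc2 : 1 < count_mem t M.
  rewrite /M count_pmap.
  apply: (@two_count _ _ _ w w2).
  - rewrite mem_filter; apply/andP; split => //.
    by rewrite e ep /Px /=; apply/hasP; exists a; rewrite ?hJ.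
  - rewrite mem_filter; apply/andP; split => //.
    by rewrite e2' /Px /=; apply/hasP; exists b; rewrite ?hJ.
  - by apply/eqP; rewrite e ep e2' /= => -[=].
  - by rewrite e ep /=.
  - by rewrite e2' /=.
have hu : uniq J by rewrite filter_uniq ?iota_uniq.
have := pigeon _ _ _ _ hu hsub htJ hc2.
by rewrite ltnNge hsz.
Qed.


Lemma cover_ok i : 1 <= i <= n -> exists2 t, t \in C0 & S t i.
Proof.
move=> hi.
case: (boolP (has (fun t => S t i) C0)) => [/hasP[t ht hs]|/hasPn hnot]; first by exists t.
exfalso.
pose Bd (v : vtx) : bool := match v with
  | vU a | vUij a _ | vUpij a _ | vVij a _ | vVpij a _ => a == i
  | _ => false end.
have key : forall a b, H_arc W a b -> Bd a = Bd b.
  move=> a b [w hwW [p [q e]]].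
  have ha := arcW hwW e.
  inversion ha; subst => //=.
  - case: eqP => // ei; subst i0.
    have [l el] := z_walk hwW (erefl _).
    subst p.
    have hC0 := fz_C0 _ t hwW (erefl _).
    by move: (hnot t hC0); rewrite H0.
  - case: (boolP (t \in C0)) => hc.
      have := hnot t hc; rewrite /=.
      case: eqP => [e1|_]; first by subst i0; rewrite H0.
      case: eqP => [e1|_]; first by subst i'; rewrite H1.
      by [].
    by case: (no_horiz t hc i0 _ p i' q hwW (erefl _)).
have key2 : forall a b, clos_refl_trans vtx
     (fun a b => H_arc W a b \/ H_arc W b a) a b -> Bd a = Bd b.
  move=> a b; elim => [x y [h|h]| x | x y z _ h1 _ h2].
  - exact: key.
  - by rewrite (key _ _ h).
  - by [].
  - by rewrite h1 h2.
have hv1 : V (vU i) by [].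
have [_ hrt] := hC (vU i) vZ hv1 (erefl true).
by have := key2 _ _ hrt; rewrite /= eqxx.
Qed.

Lemma sizeC0 : size C0 <= k.
Proof.
apply: leq_trans (size_undup _) _.
rewrite size_pmap.
pose Zp := fun w : seq vtx => has (fun l => ohead w == Some (vZl l)) (iota 1 k).
apply: (@leq_trans (count Zp W)).
  apply: sub_in_count' => w hwW.
  case E: (fz w) => [t|] // _.
  case: w hwW E => [|[] // l [|[] // [|[] // i0 t' r]]] //= hwW _.
  have [_ [hV _]] := hw _ hwW.
  have hl : V (vZl l) by apply: hV; rewrite mem_head.
  apply/hasP; exists l => //; rewrite mem_iota; move: hl => /=; lia.
rewrite (@count_has_uniq _ _ W (iota 1 k) vZl) ?size_iota //.
  by rewrite map_inj_uniq ?iota_uniq // => a1 a2 [].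
move=> l; rewrite mem_iota => hl; rewrite (hB (vZl l)) //= ; lia.
Qed.

End Main.

Lemma pad m k d : forall C : seq nat, k - size C = d -> uniq C ->
  (forall t, t \in C -> 1 <= t <= m) -> size C <= k <= m ->
  exists C', [/\ uniq C', size C' = k, (forall t, t \in C' -> 1 <= t <= m) & {subset C <= C'}].
Proof.
elim: d => [|d IH] C hd hu hr /andP[hs hk].
  by exists C; split => //; apply/eqP; rewrite eqn_leq hs /= -subn_eq0 hd.
case: (boolP (has (fun t => t \notin C) (iota 1 m))) => [/hasP[t ht htC]|/hasPn hall].
  have [C' [h1 h2 h3 h4]] := IH (t :: C) ltac:(simpl; lia) ltac:(by rewrite /= htC hu)
    ltac:(by move=> x; rewrite inE => /orP[/eqP ->|/hr]; rewrite ?mem_iota in ht; [lia|])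
    ltac:(apply/andP; simpl; split; lia).
  by exists C'; split => // x hx; apply: h4; rewrite inE hx orbT.
exfalso.
have : size (iota 1 m) <= size C.
  apply: uniq_leq_size; first exact: iota_uniq.
  by move=> x /hall; rewrite negbK.
rewrite size_iota; lia.
Qed.

Theorem lemma8 (n m k : nat) (S : nat -> pred nat) :
  set_cover_instance n m k S ->
  ST_positive (DSC_vertex n m k S) (DSC_arc n m k S) F_SC B_SC ->
  has_set_cover_of_size n m k S.
Proof.
move=> hinst [W [hw [hB hC']]].
have hC : forall x y, DSC_vertex n m k S x -> DSC_vertex n m k S y -> H_connected W x y.
  by move=> x y hx hy; apply: hC'.
have hr : forall t, t \in C0 W -> 1 <= t <= m.
  move=> t; rewrite mem_undup mem_pmap => /mapP[w hwW].
  case: w hwW => [|[] // l [|[] // [|[] // i0 t' r]]] //= hwW [->].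
  have [_ [hV _]] := hw _ hwW.
  have : DSC_vertex n m k S (vVij i0 t') by apply: hV; rewrite !inE eqxx !orbT.
  by rewrite /= /inI => /and3P[].
have hk : k <= m by case: hinst => _ [_ /andP[]].
have [C [h1 h2 h3 h4]] := pad m k (k - size (C0 W)) (C0 W) (erefl _) (undup_uniq _) hr
   ltac:(apply/andP; split => //; exact: (@sizeC0 n m k S W hw hB)).
exists C; split => // i hi.
have [t ht hs] := @cover_ok n m k S W hinst hw hB hC i hi.
by exists t => //; apply: h4.
Qed.
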